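(* Let $Z\in\mathbb{R}^{N\times k}$ have rows $\mathbf{z}_1^\top,\dots,\mathbf{z}_N^\top$ and let $\Pi=\{\pi_1,\dots,\pi_C\}$ be a partition of $[N]$ into $C\ge 2$ nonempty classes. For $\pi\in\Pi$ let $\boldsymbol{\mu}_\pi=\frac{1}{|\pi|}\sum_{i\in\pi}\mathbf{z}_i$ and $\boldsymbol{\mu}_\Pi=\frac1N\sum_{j=1}^N\mathbf{z}_j$, and define $$\mathcal{M}_{kms}(\Pi,Z)=\frac{\sum_{\pi\in\Pi}\sum_{i\in\pi}\|\mathbf{z}_i-\boldsymbol{\mu}_\pi\|^2}{\sum_{\pi\in\Pi}|\pi|\,\|\boldsymbol{\mu}_\pi-\boldsymbol{\mu}_\Pi\|^2}.$$ For distinct $\pi,\pi'\in\Pi$ let $\xi_{\pi\to\pi'}=\{i\in\pi:\|\mathbf{z}_i-\boldsymbol{\mu}_\pi\|_2\ge\|\mathbf{z}_i-\boldsymbol{\mu}_{\pi'}\|_2\}$ and assume $|\xi_{\pi\to\pi'}|>0$ for all such pairs. Define $\mathcal{E}_{\pi\to\pi'}=\frac{|\xi_{\pi\to\pi'}|}{|\pi'|+|\pi|}$ and $$\mathcal{E}_{\Pi,Z}=C(C-1)\Big/\sum_{\pi\ne\pi',\ \pi,\pi'\in\Pi}\frac{1}{\mathcal{E}_{\pi\to\pi'}}.$$ Then $\mathcal{E}_{\Pi,Z}=O(\mathcal{M}_{kms}(\Pi,Z))$.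
   Context: $\mathcal{E}_{\Pi,Z}$ is the harmonic mean of the pairwise clustering error ratios; $\mathcal{M}_{kms}$ is the ratio of the intra-class measure to the inter-class measure (assumed nonzero). The implied constant in $O(\cdot)$ depends only on $C$. *)

(* Defs.v *)
From HB Require Import structures.
From mathcomp Require Import all_boot all_order all_algebra.
Set Implicit Arguments. Unset Strict Implicit. Unset Printing Implicit Defensive.
Import Order.TTheory GRing.Theory Num.Theory.
Local Open Scope ring_scope.

Section Defs.
Variables (R : rcfType) (N k C : nat).
Variables (Z : 'M[R]_(N, k)) (lab : 'I_N -> 'I_C).

(* the class pi_c of the partition, given by a labelling of the points *)
Definition cls (c : 'I_C) : {set 'I_N} := [set i | lab i == c].

Definition norm2 (v : 'rV[R]_k) : R := Num.sqrt (\sum_j (v 0 j) ^+ 2).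

Definition meanrow (A : {set 'I_N}) : 'rV[R]_k :=
  (#|A|%:R)^-1 *: \sum_(i in A) row i Z.

Definition mu (c : 'I_C) : 'rV[R]_k := meanrow (cls c).
Definition muAll : 'rV[R]_k := (N%:R)^-1 *: \sum_(j < N) row j Z.

Definition intra : R :=
  \sum_(c < C) \sum_(i in cls c) norm2 (row i Z - mu c) ^+ 2.
Definition inter : R :=
  \sum_(c < C) #|cls c|%:R * norm2 (mu c - muAll) ^+ 2.
Definition Mkms : R := intra / inter.

Definition xi (c c' : 'I_C) : {set 'I_N} :=
  [set i in cls c | norm2 (row i Z - mu c') <= norm2 (row i Z - mu c)].

Definition Err (c c' : 'I_C) : R :=
  #|xi c c'|%:R / (#|cls c'|%:R + #|cls c|%:R).

Definition EPi : R :=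
  (C * (C - 1))%:R / \sum_(c < C) \sum_(c' < C | c' != c) (Err c c')^-1.
End Defs.

(* Main.v *)
Require Import Defs.
From HB Require Import structures.
From mathcomp Require Import all_boot all_order all_algebra.
From mathcomp Require Import ring lra.
Set Implicit Arguments. Unset Strict Implicit. Unset Printing Implicit Defensive.
Import Order.TTheory GRing.Theory Num.Theory.
Local Open Scope ring_scope.

Definition sqn (R : rcfType) k (v : 'rV[R]_k) : R := \sum_j (v 0 j) ^+ 2.

Lemma sqn_ge0 (R : rcfType) k (v : 'rV[R]_k) : 0 <= sqn v.
Proof. by apply: sumr_ge0 => j _; exact: sqr_ge0. Qed.

Lemma norm2_sq (R : rcfType) k (v : 'rV[R]_k) : norm2 v ^+ 2 = sqn v.
Proof. by rewrite /norm2 sqr_sqrtr //; exact: sqn_ge0. Qed.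

Lemma norm2_le (R : rcfType) k (a b : 'rV[R]_k) :
  (norm2 a <= norm2 b) = (sqn a <= sqn b).
Proof. by rewrite /norm2 ler_sqrt //; exact: sqn_ge0. Qed.

Lemma weighted (R : rcfType) (I : finType) (w x : I -> R) (a m W : R) :
  W = \sum_i w i -> W * m = \sum_i w i * x i -> 0 <= W ->
  \sum_i w i * (x i - m) ^+ 2 <= \sum_i w i * (x i - a) ^+ 2.
Proof.
move=> hW hm W0; rewrite -subr_ge0 -sumrB.
have -> : \sum_i (w i * (x i - a) ^+ 2 - w i * (x i - m) ^+ 2)
   = \sum_i (2 * (m - a) * (w i * x i) - (m - a) * (a + m) * w i).
  by apply: eq_bigr => i _; ring.
rewrite sumrB -!mulr_sumr -hm -hW.
have -> : 2 * (m - a) * (W * m) - (m - a) * (a + m) * W = W * (m - a) ^+ 2 by ring.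
by apply: mulr_ge0 => //; exact: sqr_ge0.
Qed.

Lemma term_le_sum (R : rcfType) (I : finType) (P : pred I) (F : I -> R) i :
  P i -> (forall j, P j -> 0 <= F j) -> F i <= \sum_(j | P j) F j.
Proof.
move=> Pi F0; rewrite (bigD1 i) //= lerDl; apply: sumr_ge0 => j /andP[Pj _].
exact: F0.
Qed.

Lemma sq_diff_le (R : rcfType) k (u w : 'rV[R]_k) :
  sqn (u - w) <= 2 * sqn u + 2 * sqn w.
Proof.
rewrite /sqn !mulr_sumr -big_split /=; apply: ler_sum => j _.
rewrite !mxE -subr_ge0.
have -> : 2 * u 0 j ^+ 2 + 2 * w 0 j ^+ 2 - (u 0 j - w 0 j) ^+ 2
   = (u 0 j + w 0 j) ^+ 2 by ring.
exact: sqr_ge0.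
Qed.

Lemma rsubE (R : rcfType) k (a b : 'rV[R]_k) j : (a - b) 0 j = a 0 j - b 0 j.
Proof. by rewrite !mxE. Qed.

Section Main.
Variables (R : rcfType) (N k C : nat) (Z : 'M[R]_(N, k)) (lab : 'I_N -> 'I_C).

Lemma sum_part (V : nmodType) (F : 'I_N -> V) :
  \sum_(c < C) \sum_(i in cls lab c) F i = \sum_i F i.
Proof.
rewrite [RHS](partition_big lab xpredT) //=.
apply: eq_bigr => c _; apply: eq_bigl => i; by rewrite inE.
Qed.

Hypothesis hne : forall c : 'I_C, exists i : 'I_N, lab i = c.

Lemma cls_gt0 c : (0 < #|cls lab c|)%N.
Proof. have [i hi] := hne c; apply/card_gt0P; exists i; by rewrite inE hi. Qed.

Lemma mu_entry c j : #|cls lab c|%:R * mu Z lab c 0 j = \sum_(i in cls lab c) Z i j.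
Proof.
rewrite /mu /meanrow mxE summxE mulrA mulfV ?mul1r ?pnatr_eq0 -?lt0n ?cls_gt0 //.
by apply: eq_bigr => i _; rewrite mxE.
Qed.

Lemma N_eq : \sum_(c < C) (#|cls lab c|%:R : R) = N%:R.
Proof.
have := sum_part (fun _ => (1 : R)); rewrite sumr_const card_ord => <-.
by apply: eq_bigr => c _; rewrite sumr_const.
Qed.

Lemma muAll_entry j : (N%:R : R) * muAll Z 0 j = \sum_(c < C) #|cls lab c|%:R * mu Z lab c 0 j.
Proof.
under [RHS]eq_bigr do rewrite mu_entry.
rewrite sum_part /muAll mxE summxE.
have [N0|N0] := eqVneq N 0%N.
  have -> : (N%:R : R) = 0 by rewrite N0.
  rewrite mul0r; symmetry; apply: big1 => i _.
  by have := ltn_ord i; rewrite {2}N0.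
rewrite mulrA mulfV ?mul1r ?pnatr_eq0 //.
by apply: eq_bigr => i _; rewrite mxE.
Qed.

Lemma inter_le c0 :
  inter Z lab <= \sum_(c < C) #|cls lab c|%:R * sqn (mu Z lab c - mu Z lab c0).
Proof.
rewrite /inter; under eq_bigr do rewrite norm2_sq.
rewrite /sqn; under eq_bigr do rewrite mulr_sumr.
under [X in _ <= X]eq_bigr do rewrite mulr_sumr.
rewrite exchange_big [X in _ <= X]exchange_big /=.
apply: ler_sum => j _.
under eq_bigr do rewrite rsubE.
under [X in _ <= X]eq_bigr do rewrite rsubE.
apply: (@weighted _ _ (fun c => #|cls lab c|%:R) (fun c => mu Z lab c 0 j)
   (mu Z lab c0 0 j) (muAll Z 0 j) N%:R).
- by rewrite N_eq.
- by rewrite muAll_entry.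
- exact: ler0n.
Qed.

Lemma sub_sum_le (A B : {set 'I_N}) (F : 'I_N -> R) :
  A \subset B -> (forall i, 0 <= F i) -> \sum_(i in A) F i <= \sum_(i in B) F i.
Proof.
move=> /subsetP AB F0; rewrite big_mkcond [X in _ <= X]big_mkcond /=.
apply: ler_sum => i _; case: ifP => iA; first by rewrite (AB _ iA).
by case: ifP.
Qed.

Lemma intra_ge c c' :
  #|xi Z lab c c'|%:R * sqn (mu Z lab c - mu Z lab c') <= 4 * intra Z lab.
Proof.
apply: (le_trans (y := \sum_(i in xi Z lab c c') 4 * sqn (row i Z - mu Z lab c))).
  rewrite mulr_natl -sumr_const; apply: ler_sum => i; rewrite inE => /andP[_ hi].
  rewrite norm2_le in hi.
  have -> : mu Z lab c - mu Z lab c' = (row i Z - mu Z lab c') - (row i Z - mu Z lab c).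
    by rewrite opprB [RHS]addrC addrA subrK.
  apply: (le_trans (sq_diff_le _ _)); lra.
apply: (le_trans (y := 4 * \sum_(i in cls lab c) sqn (row i Z - mu Z lab c))).
  rewrite mulr_sumr; apply: sub_sum_le => [|i].
    by apply/subsetP => i; rewrite inE => /andP[].
  by apply: mulr_ge0 => //; exact: sqn_ge0.
rewrite /intra ler_wpM2l //.
have E d : \sum_(i in cls lab d) norm2 (row i Z - mu Z lab d) ^+ 2
         = \sum_(i in cls lab d) sqn (row i Z - mu Z lab d).
  by apply: eq_bigr => i _; exact: norm2_sq.
under [X in _ <= X]eq_bigr do rewrite E.
apply: (term_le_sum (P := xpredT) (F := fun d => \sum_(i in cls lab d) sqn (row i Z - mu Z lab d))) => // d _.
by apply: sumr_ge0 => i _; exact: sqn_ge0.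
Qed.

End Main.

Theorem theorem2 (R : rcfType) (C : nat) (hC : (2 <= C)%N) :
  exists K : R, 0 < K /\
  forall (N k : nat) (Z : 'M[R]_(N, k)) (lab : 'I_N -> 'I_C),
    (forall c : 'I_C, exists i : 'I_N, lab i = c) ->
    (forall c c' : 'I_C, c != c' -> (0 < #|xi Z lab c c'|)%N) ->
    inter Z lab != 0 ->
    EPi Z lab <= K * Mkms Z lab.
Proof.
pose M : R := (C * (C - 1))%:R.
have M0 : 0 <= M by exact: ler0n.
exists (C%:R * (4 * M)); split.
  rewrite /M -!natrM ltr0n; rewrite !muln_gt0 /=.
  by rewrite (leq_trans _ hC) //= subn_gt0 (leq_trans _ hC).
move=> N k Z lab hne hxi hint.
have C0 : (0 < C)%N by rewrite (leq_trans _ hC).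
pose c0 : 'I_C := Ordinal C0.
have ncls c : (0 < #|cls lab c|)%N := cls_gt0 hne c.
have Err_gt0 c c' : c != c' -> 0 < Err Z lab c c'.
  move=> ne; rewrite /Err divr_gt0 // ?ltr0n ?hxi //.
  by rewrite -natrD ltr0n addn_gt0 ncls.
have Err_ge0 c c' : 0 <= (Err Z lab c c')^-1.
  by rewrite invr_ge0 /Err divr_ge0 // ?addr_ge0 ?ler0n.
have EPi0 : 0 <= EPi Z lab.
  rewrite /EPi divr_ge0 ?ler0n //; apply: sumr_ge0 => c _; apply: sumr_ge0 => c' _.
  exact: Err_ge0.
have step2 c c' : c' != c -> EPi Z lab * (Err Z lab c c')^-1 <= M.
  move=> ne.
  have tS : (Err Z lab c c')^-1 <=
     \sum_(d < C) \sum_(d' < C | d' != d) (Err Z lab d d')^-1.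
    have h1 := (@term_le_sum _ _ xpredT
       (fun d => \sum_(d' < C | d' != d) (Err Z lab d d')^-1) c isT).
    apply: le_trans (h1 _).
    by apply: (term_le_sum (P := fun d' => d' != c)) => // d' _; exact: Err_ge0.
    by move=> d _; apply: sumr_ge0 => d' _; exact: Err_ge0.
  have t0 : 0 < (Err Z lab c c')^-1 by rewrite invr_gt0 Err_gt0 // eq_sym.
  have S0 := lt_le_trans t0 tS.
  rewrite /EPi mulrAC ler_pdivrMr // -/M ler_wpM2l //.
have step4 c : c != c0 -> EPi Z lab * ((#|cls lab c0|%:R + #|cls lab c|%:R) *
     sqn (mu Z lab c - mu Z lab c0)) <= M * (4 * intra Z lab).
  move=> ne.
  have x0 : 0 < (#|xi Z lab c c0|%:R : R) by rewrite ltr0n hxi.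
  have -> : EPi Z lab * ((#|cls lab c0|%:R + #|cls lab c|%:R) *
     sqn (mu Z lab c - mu Z lab c0)) =
     (EPi Z lab * (Err Z lab c c0)^-1) * (#|xi Z lab c c0|%:R * sqn (mu Z lab c - mu Z lab c0)).
    rewrite /Err invf_div; field; by rewrite lt0r_neq0.
  apply: ler_pM => //.
  - by apply: mulr_ge0.
  - by apply: mulr_ge0 => //; exact: sqn_ge0.
  - by apply: step2; rewrite eq_sym.
  - exact: intra_ge.
have intra0 : 0 <= intra Z lab.
  by apply: sumr_ge0 => c _; apply: sumr_ge0 => i _; exact: sqr_ge0.
have inter0 : 0 < inter Z lab.
  rewrite lt0r hint /=; apply: sumr_ge0 => c _; apply: mulr_ge0 => //; exact: sqr_ge0.
rewrite /Mkms mulrA ler_pdivlMr //.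
apply: (le_trans (y := EPi Z lab * \sum_(c < C) (#|cls lab c0|%:R + #|cls lab c|%:R) *
     sqn (mu Z lab c - mu Z lab c0))).
  apply: ler_wpM2l => //. have hi := inter_le Z hne c0. apply: (le_trans hi).
  apply: ler_sum => c _; apply: ler_wpM2r; first exact: sqn_ge0.
  by rewrite lerDr ler0n.
have -> : C%:R * (4 * M) * intra Z lab = (M * (4 * intra Z lab)) *+ C.
  by rewrite -mulr_natl; ring.
rewrite mulr_sumr; apply: (le_trans (y := \sum_(c < C) M * (4 * intra Z lab))); last first.
  by rewrite sumr_const card_ord.
apply: ler_sum => c _.
have [->|ne] := eqVneq c c0.
  rewrite subrr /sqn big1 ?mulr0 ?mulr0 ?mulr_ge0 // => j _.
  by rewrite mxE expr0n.
exact: step4.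
Qed.
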